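(* Let $G$ be a connected graph of girth at least $6$ that has exactly two vertices $x,y$ of type $2$ and no vertex of type $k$ for any $k\geq 3$. Then $G$ is almost well-covered if and only if $x$ and $y$ are adjacent and one of the following two conditions holds: (1) $V(G_0)=\emptyset$; (2) $G_0\cong K_2$, neither $x$ nor $y$ has a neighbor in $G_0$, and the two vertices of $G_0$ both have degree $2$ in $G$ and are contained in an induced $6$-cycle of $G$ that contains $x$ and $y$.
   Context: All graphs are finite and simple. The girth of a graph is the length of a shortest cycle (infinite for acyclic graphs). For a graph $G$, $\alpha(G)$ is the maximum size of an independent set and $i(G)$ is the minimum size of an inclusion-maximal independent set. $G$ is almost well-covered if $\alpha(G)-i(G)=1$. Types of vertices: let $U$ be the set of vertices of $G$ whose connected component in $G$ is a complete graph. In $G-U$, vertices of degree $1$ are called leaves and the other vertices are called internal vertices. An internal vertex adjacent to exactly $k$ leaves is said to be of type $k$; in addition, every vertex of $U$ is of type $0$ (leaves of $G-U$ have no type). $G_i$ denotes the subgraph of $G$ induced by all vertices of type $i$. *)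

(* Defs.v *)
From mathcomp Require Import all_boot.
Set Implicit Arguments. Unset Strict Implicit. Unset Printing Implicit Defensive.

Section Graphs.
Variables (T : finType) (e : rel T).

Definition simple_graph : Prop := symmetric e /\ irreflexive e.

Definition connected_graph : Prop := forall u v : T, connect e u v.

Definition is_cycle (s : seq T) : bool := [&& uniq s, cycle e s & 3 <= size s].

Definition girth_at_least (g : nat) : Prop :=
  forall s : seq T, is_cycle s -> g <= size s.

(* induced cycle: a cycle whose only edges among its vertices are cycle edges *)
Definition induced_cycle (s : seq T) : Prop :=
  is_cycle s /\
  forall u w, u \in s -> w \in s -> e u w ->
    (index w s == (index u s).+1 %% size s) || (index u s == (index w s).+1 %% size s).

Definition deg (v : T) : nat := #|[set u | e v u]|.

Definition independent (S : {set T}) : bool :=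
  [forall u in S, forall w in S, ~~ e u w].

Definition maximal_independent (S : {set T}) : bool := maxset independent S.

Definition alpha : nat := \max_(S : {set T} | independent S) #|S|.

(* minimum size of a maximal independent set (the default #|T| is never
   smaller than the true minimum, and maximal independent sets always exist) *)
Definition indep_dom : nat :=
  \big[minn/#|T|]_(S : {set T} | maximal_independent S) #|S|.

Definition almost_well_covered : Prop := alpha - indep_dom = 1.

Definition complete_on (A : {set T}) : bool :=
  [forall u in A, forall w in A, (u != w) ==> e u w].

Definition Uset : {set T} := [set v | complete_on [set u | connect e v u]].

Definition degGU (v : T) : nat := #|[set u | e v u & u \notin Uset]|.

Definition leaf (v : T) : bool := (v \notin Uset) && (degGU v == 1).

Definition internal (v : T) : bool := (v \notin Uset) && ~~ leaf v.

Definition has_type (v : T) (k : nat) : bool :=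
  ((v \in Uset) && (k == 0)) ||
  (internal v && (#|[set u | e v u & leaf u]| == k)).

Definition G_ (k : nat) : {set T} := [set v | has_type v k].

End Graphs.

(* Main.v *)
Require Import Defs.
From mathcomp Require Import all_boot.
From Stdlib Require Import Classical.
From mathcomp Require Import zify.
Set Implicit Arguments. Unset Strict Implicit. Unset Printing Implicit Defensive.

Section Main.
Variables (T : finType) (e : rel T) (x y : T).
Hypotheses (Hsimple : simple_graph e) (Hconn : connected_graph e)
  (Hgirth : girth_at_least e 6) (Hxy : x != y)
  (Hx2 : has_type e x 2) (Hy2 : has_type e y 2)
  (Honly2 : forall v : T, has_type e v 2 -> v = x \/ v = y)
  (Hno3 : forall (v : T) (k : nat), 3 <= k -> ~~ has_type e v k).

Lemma eC u v : e u v = e v u.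
Proof. by case: Hsimple => s _; apply: s. Qed.
Lemma eirr u : e u u = false.
Proof. by case: Hsimple => _ i; apply: i. Qed.
Lemma eneq u v : e u v -> u != v.
Proof. by move=> h; apply/eqP=> E; move: h; rewrite E eirr. Qed.

Lemma C3 a b c : e a b -> e b c -> e c a -> False.
Proof.
move=> ab bc ca.
have nab := eneq ab; have nbc := eneq bc; have nac : a != c by rewrite eq_sym eneq.
have := Hgirth (s := [:: a; b; c]).
by rewrite /is_cycle /= !inE !negb_or nab nbc nac ab bc ca => /(_ isT).
Qed.

Lemma C4 a b c d : e a b -> e b c -> e c d -> e d a -> a != c -> b != d -> False.
Proof.
move=> ab bc cd da ac bd.
have nab := eneq ab; have nbc := eneq bc; have ncd := eneq cd.
have nad : a != d by rewrite eq_sym eneq.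
have := Hgirth (s := [:: a; b; c; d]).
by rewrite /is_cycle /= !inE !negb_or nab nbc ncd nad ac bd ab bc cd da => /(_ isT).
Qed.

Lemma C5 a b c d f : e a b -> e b c -> e c d -> e d f -> e f a ->
  a != c -> b != d -> c != f -> d != a -> f != b -> False.
Proof.
move=> ab bc cd df fa ac bd cf da fb.
have nab := eneq ab; have nbc := eneq bc; have ncd := eneq cd; have ndf := eneq df.
have naf : a != f by rewrite eq_sym eneq.
have nad : a != d by rewrite eq_sym.
have nbf : b != f by rewrite eq_sym.
have := Hgirth (s := [:: a; b; c; d; f]).
by rewrite /is_cycle /= !inE !negb_or nab nbc ncd ndf naf nad nbf ac bd cf ab bc cd df fa => /(_ isT).
Qed.

Definition lf v := deg e v == 1.
Definition Ls v := [set u | e v u & leaf e u].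
Definition tp v := #|Ls v|.
Definition P := G_ e 0.
Definition G1 v := ~~ lf v && (tp v == 1).

Lemma U0 : Uset e = set0.
Proof.
have xU : x \notin Uset e.
  by move: Hx2; rewrite /has_type andbF /= => /andP[/andP[]].
apply/setP => v; rewrite in_set0.
apply: negbTE; move: xU; rewrite !inE.
have -> : [set u | connect e v u] = [set u | connect e x u].
  by apply/setP => u; rewrite !inE !Hconn.
by [].
Qed.

Lemma leafE v : leaf e v = lf v.
Proof.
rewrite /leaf /degGU /lf /deg U0 in_set0 /=.
suff -> : [set u | e v u & u \notin set0] = [set u | e v u] by [].
by apply/setP => u; rewrite !inE andbT.
Qed.

Lemma internalE v : internal e v = ~~ lf v.
Proof. by rewrite /internal U0 in_set0 leafE. Qed.

Lemma inLs v u : (u \in Ls v) = e v u && lf u.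
Proof. by rewrite inE leafE. Qed.

Lemma has_typeE v k : has_type e v k = ~~ lf v && (tp v == k).
Proof. by rewrite /has_type U0 in_set0 /= internalE. Qed.

Lemma inP v : (v \in P) = ~~ lf v && (tp v == 0).
Proof. by rewrite /P /G_ inE has_typeE. Qed.

Lemma tpx : ~~ lf x /\ tp x = 2.
Proof. by move: Hx2; rewrite has_typeE => /andP[-> /eqP]. Qed.
Lemma tpy : ~~ lf y /\ tp y = 2.
Proof. by move: Hy2; rewrite has_typeE => /andP[-> /eqP]. Qed.

Lemma tp_le2 v : ~~ lf v -> tp v <= 2.
Proof.
move=> hv; rewrite leqNgt; apply/negP => h.
by have := Hno3 v h; rewrite has_typeE hv eqxx.
Qed.

Lemma tp2 v : ~~ lf v -> tp v = 2 -> v = x \/ v = y.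
Proof. by move=> hv h; apply: Honly2; rewrite has_typeE hv h. Qed.

Lemma classify v : lf v \/ v \in P \/ G1 v \/ v = x \/ v = y.
Proof.
case: (boolP (lf v)) => hv; first by left.
have := tp_le2 hv; rewrite /G1 inP hv /=.
case E: (tp v) => [|[|[|n]]] // _; first by right; left.
  by right; right; left.
by case: (tp2 hv E) => ->; do 3 right; [left|right].
Qed.


Lemma leaf_nb l : lf l -> exists r, [set u | e l u] = [set r].
Proof. by move=> h; apply/cards1P. Qed.

Lemma leaf_uniq l a b : lf l -> e l a -> e l b -> a = b.
Proof.
move=> /leaf_nb [r Er] la lb.
have : a \in [set u | e l u] by rewrite inE.
have : b \in [set u | e l u] by rewrite inE.
by rewrite Er !inE => /eqP -> /eqP ->.
Qed.

Lemma leaf_int l r : lf l -> e l r -> ~~ lf r.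
Proof.
move=> hl lr; apply/negP => hr.
pose A := [set l; r].
have cl : closed e (mem A).
  move=> u w uw; rewrite !inE.
  have wu : e w u by rewrite eC.
  case: (eqVneq u l) => [ul|nul].
    by subst u; rewrite (leaf_uniq hl uw lr) eqxx orbT.
  case: (eqVneq u r) => [ur|nur].
    by subst u; rewrite eC in lr; rewrite (leaf_uniq hr uw lr) eqxx.
  case: (eqVneq w l) => [wl|nwl].
    by subst w; rewrite (leaf_uniq hl wu lr) eqxx in nur.
  case: (eqVneq w r) => [wr|nwr] //.
  by subst w; rewrite eC in lr; rewrite (leaf_uniq hr wu lr) eqxx in nul.
have := closed_connect cl (Hconn l x).
rewrite !inE eqxx /= => /esym /orP [] /eqP E; have := (proj1 tpx); rewrite E ?hl ?hr //.
Qed.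

Lemma P_nbr v u : v \in P -> e v u -> ~~ lf u.
Proof.
rewrite inP => /andP [_ /eqP h] vu; apply/negP => hu.
have : u \in Ls v by rewrite inLs vu hu.
by move/eqP: h; rewrite cards_eq0 => /eqP ->; rewrite in_set0.
Qed.

Lemma nonP_leaf r : ~~ lf r -> r \notin P -> exists l, e r l /\ lf l.
Proof.
rewrite inP => hr; rewrite hr /= => /negbTE h.
have : 0 < tp r by rewrite lt0n h.
rewrite card_gt0 => /set0Pn [l]; rewrite inLs => /andP [a b]; by exists l.
Qed.

Lemma tp_neq u v : tp u != tp v -> u != v.
Proof. by apply: contra => /eqP ->. Qed.

Lemma neqPG1 v u : v \in P -> G1 u -> v != u.
Proof. by rewrite inP /G1 => /andP[_ /eqP a] /andP[_ /eqP b]; apply: tp_neq; rewrite a b. Qed.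
Lemma neqPx v : v \in P -> v != x.
Proof. by rewrite inP => /andP[_ /eqP a]; apply: tp_neq; rewrite a (proj2 tpx). Qed.
Lemma neqPy v : v \in P -> v != y.
Proof. by rewrite inP => /andP[_ /eqP a]; apply: tp_neq; rewrite a (proj2 tpy). Qed.
Lemma neqG1x v : G1 v -> v != x.
Proof. by rewrite /G1 => /andP[_ /eqP a]; apply: tp_neq; rewrite a (proj2 tpx). Qed.
Lemma neqG1y v : G1 v -> v != y.
Proof. by rewrite /G1 => /andP[_ /eqP a]; apply: tp_neq; rewrite a (proj2 tpy). Qed.
Lemma P_int v : v \in P -> ~~ lf v.
Proof. by rewrite inP => /andP[]. Qed.
Lemma G1_int v : G1 v -> ~~ lf v.
Proof. by case/andP. Qed.
Lemma xnP : x \notin P.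
Proof. by apply/negP => /neqPx; rewrite eqxx. Qed.
Lemma ynP : y \notin P.
Proof. by apply/negP => /neqPy; rewrite eqxx. Qed.
Lemma G1nP v : G1 v -> v \notin P.
Proof. by move=> h; apply/negP => /neqPG1 /(_ h); rewrite eqxx. Qed.


Lemma indepP (S : {set T}) :
  reflect (forall u w, u \in S -> w \in S -> ~~ e u w) (independent e S).
Proof.
apply: (iffP forall_inP) => h.
  by move=> u w uS wS; move/forall_inP: (h u uS); apply.
by move=> u uS; apply/forall_inP => w wS; apply: h.
Qed.

Lemma max_ind S : maximal_independent e S -> independent e S.
Proof. by case/maxsetP. Qed.

Lemma max_dom S v : maximal_independent e S -> v \notin S -> exists u, u \in S /\ e u v.
Proof.
case/maxsetP => iS mS vS.
case: (classic (exists u, u \in S /\ e u v)) => // H; exfalso.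
have : independent e (v |: S).
  apply/indepP => a b; rewrite !inE => /orP[/eqP ->|aS] /orP[/eqP ->|bS].
  - by rewrite eirr.
  - by rewrite eC; apply/negP => h; apply: H; exists b.
  - by apply/negP => h; apply: H; exists a.
  - by move/indepP: iS; apply.
move/mS => /(_ (subsetUr _ _)) E.
by move: vS; rewrite -E setU11.
Qed.

Lemma exists_max B : independent e B -> exists S, maximal_independent e S /\ B \subset S.
Proof. by move=> h; case: (maxset_exists h) => S a b; exists S. Qed.

Lemma alpha_ge S : independent e S -> #|S| <= alpha e.
Proof. by move=> h; rewrite /alpha; apply: (@leq_bigmax_cond _ (fun S : {set T} => independent e S) (fun S => #|S|) S h). Qed.

Lemma alpha_le k : (forall S, independent e S -> #|S| <= k) -> alpha e <= k.
Proof. by move=> h; apply/bigmax_leqP. Qed.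

Lemma idom_le S : maximal_independent e S -> indep_dom e <= #|S|.
Proof.
move=> h; rewrite /indep_dom.
have : S \in index_enum {set T} by rewrite mem_index_enum.
elim: (index_enum _) => [|a r IH] //; rewrite big_cons inE => /orP [/eqP <-|/IH].
  by rewrite h geq_minl.
by case: ifP => // _ h2; apply: leq_trans h2; apply: geq_minr.
Qed.

Lemma idom_ge (Pr : nat -> Prop) : Pr #|T| -> (forall a b, Pr a -> Pr b -> Pr (minn a b)) ->
  (forall S, maximal_independent e S -> Pr #|S|) -> Pr (indep_dom e).
Proof. by move=> h0 h1 h2; rewrite /indep_dom; apply: big_ind. Qed.


Definition cnt (S : {set T}) r := (r \in S) + #|S :&: Ls r|.
Definition grp v := if lf v then odflt v [pick u | e v u] else v.

Lemma grpE v r : ~~ lf r -> (grp v == r) = (v == r) || (v \in Ls r).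
Proof.
move=> hr; rewrite /grp inLs; case: ifP => hv.
  case: pickP => [u uv|none] /=.
    have nvr : (v == r) = false by apply/negbTE; apply: contraNneq hr => <-.
    rewrite nvr /= ?andbT eC.
    apply/eqP/idP => [<- //|rv]; exact: leaf_uniq hv uv rv.
  case/leaf_nb: hv => u E; have : u \in [set u | e v u] by rewrite E set11.
  by rewrite inE none.
by rewrite andbF orbF.
Qed.

Lemma grp_int v : ~~ lf (grp v).
Proof.
rewrite /grp; case: ifP => hv; last by rewrite hv. case: (pickP (fun u => e v u)) => [u uv|none] /=.
  exact: leaf_int hv uv.
case/leaf_nb: hv => u E; have : u \in [set u | e v u] by rewrite E set11.
by rewrite inE none.
Qed.

Lemma cntE (S : {set T}) r : ~~ lf r -> #|[set v in S | grp v == r]| = cnt S r.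
Proof.
move=> hr.
have -> : [set v in S | grp v == r] = (S :&: [set r]) :|: (S :&: Ls r).
  by apply/setP => v; rewrite !inE grpE // inLs leafE andb_orr.
rewrite cardsU.
have -> : (S :&: [set r]) :&: (S :&: Ls r) = set0.
  apply/setP => v; rewrite !inE; case: (eqVneq v r) => [->|]; by rewrite ?eirr ?andbF.
rewrite cards0 subn0 /cnt; congr (_ + _).
case: (boolP (r \in S)) => rS.
  by rewrite (setIidPr _) ?cards1 // sub1set.
have -> : S :&: [set r] = set0.
  by apply/setP => v; rewrite !inE; case: (eqVneq v r) => [->|]; rewrite ?(negbTE rS) ?andbF.
by rewrite cards0.
Qed.

Lemma count_split (S : {set T}) : #|S| = \sum_(r | ~~ lf r) cnt S r.
Proof.
rewrite -sum1_card (partition_big grp (fun r => ~~ lf r)) /=; last by move=> v _; apply: grp_int.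
apply: eq_bigr => r hr; rewrite -(cntE S hr) -sum1_card.
by apply: eq_bigl => v; rewrite inE.
Qed.

Lemma sum_ind (A : {set T}) : (forall r, r \in A -> ~~ lf r) ->
  \sum_(r | ~~ lf r) (r \in A : nat) = #|A|.
Proof.
move=> h.
rewrite (eq_bigr (fun r => if r \in A then 1 else 0)); last by move=> r _; case: (r \in A).
rewrite -big_mkcondr sum1_card; apply: eq_card => r /=.
by rewrite unfold_in /=; case: (boolP (r \in A)) => rA; rewrite ?andbF ?(h r rA).
Qed.


Lemma cnt_ind S r : independent e S -> ~~ lf r ->
  cnt S r <= (if r \in S then 1 else tp r).
Proof.
move=> /indepP iS hr; rewrite /cnt; case: ifP => rS.
  suff -> : S :&: Ls r = set0 by rewrite cards0.
  apply/setP => l; rewrite !inE; apply/negbTE; apply/negP => /and3P [lS rl _].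
  by move: (iS _ _ rS lS); rewrite rl.
by rewrite add0n /tp; apply: subset_leq_card; apply: subsetIr.
Qed.

Lemma cnt_max S r : maximal_independent e S -> ~~ lf r ->
  cnt S r = (if r \in S then 1 else tp r).
Proof.
move=> mS hr; apply/eqP; rewrite eqn_leq cnt_ind ?max_ind //=.
rewrite /cnt; case: ifP => rS //.
rewrite add0n /tp; apply: subset_leq_card; apply/subsetP => l lL.
rewrite inE lL andbT; apply/negP => /negP lS.
case: (max_dom mS lS) => u [uS ul].
move: lL; rewrite inLs => /andP [rl hl].
rewrite eC in ul; rewrite eC in rl.
by move: rS; rewrite -(leaf_uniq hl ul rl) uS.
Qed.

Lemma upper_gen S1 S2 : maximal_independent e S1 -> independent e S2 ->
  #|S2| + #|P :&: S1| <= #|S1| + #|P :&: S2| + #|[set x; y] :&: S1|.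
Proof.
move=> m1 i2.
have intP : forall A : {set T}, forall r, r \in P :&: A -> ~~ lf r.
  by move=> A r; rewrite inE => /andP [/P_int ->].
have intxy : forall r, r \in [set x; y] :&: S1 -> ~~ lf r.
  by move=> r; rewrite !inE => /andP [/orP [] /eqP -> _]; [apply: (proj1 tpx)|apply: (proj1 tpy)].
rewrite (count_split S1) (count_split S2) -(sum_ind (intP S1)) -(sum_ind (intP S2)) -(sum_ind intxy).
rewrite -!big_split /=; apply: leq_sum => r hr.
rewrite (cnt_max m1 hr); have := cnt_ind i2 hr.
rewrite !in_setI in_set2.
case: (classify r) => [|[rP|[rG|[->|->]]]].
- by rewrite (negbTE hr).
- have t0 : tp r = 0 by move: rP; rewrite inP => /andP [_ /eqP].
  rewrite rP t0 (negbTE (neqPx rP)) (negbTE (neqPy rP)) /=.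
  by case: (r \in S1); case: (r \in S2) => /=; rewrite ?addn0 ?add0n ?addn1 //;
     move=> h; apply: leq_trans (leq_add h (leqnn _)) _.
- have t1 : tp r = 1 by move: rG; rewrite /G1 => /andP [_ /eqP].
  rewrite (negbTE (G1nP rG)) t1 (negbTE (neqG1x rG)) (negbTE (neqG1y rG)) /=.
  by case: (r \in S1); case: (r \in S2) => /= h; rewrite ?addn0 ?add0n.
- rewrite (negbTE xnP) (proj2 tpx) eqxx /=.
  by case: (x \in S1); case: (x \in S2) => /= h; rewrite ?addn0 ?add0n ?addn1 //;
     apply: leq_trans h _.
- rewrite (negbTE ynP) (proj2 tpy) eqxx orbT /=.
  by case: (y \in S1); case: (y \in S2) => /= h; rewrite ?addn0 ?add0n ?addn1 //;
     apply: leq_trans h _.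
Qed.


Lemma lower_x : exists S1 S2, [/\ maximal_independent e S1, independent e S2 & #|S2| = #|S1| + 1].
Proof.
have i1 : independent e [set x] by apply/indepP => u w; rewrite !inE => /eqP -> /eqP ->; rewrite eirr.
case: (exists_max i1) => S1 [m1 sub]; have xS1 : x \in S1 by rewrite -sub1set.
have iS1 := max_ind m1.
exists S1, ((S1 :\ x) :|: Ls x); split => //.
  apply/indepP => u w; rewrite !inE !leafE.
  move=> /orP [/andP [ux uS]|/andP [xu hu]] /orP [/andP [wx wS]|/andP [xw hw]].
  - by move/indepP: iS1; apply.
  - apply/negP => uw; rewrite eC in uw; rewrite eC in xw.
    by move: ux; rewrite (leaf_uniq hw uw xw) eqxx.
  - apply/negP => uw; rewrite eC in xu.
    by move: wx; rewrite (leaf_uniq hu uw xu) eqxx.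
  - by apply/negP => uw; move: (leaf_int hu uw); rewrite hw.
rewrite cardsU.
have -> : (S1 :\ x) :&: Ls x = set0.
  apply/setP => l; rewrite in_setI in_setD1 inLs in_set0.
  apply/negbTE; apply/negP => /andP [/andP [_ lS] /andP [xl _]].
  by move/indepP: iS1 => /(_ _ _ xS1 lS); rewrite xl.
rewrite cards0 subn0 (cardsD1 x S1) xS1 -/(tp x) (proj2 tpx) add1n.
by rewrite addn1 addn2.
Qed.

Lemma awc_of_bound : (forall S1 S2, maximal_independent e S1 -> independent e S2 ->
  #|S2| <= #|S1| + 1) -> almost_well_covered e.
Proof.
move=> hb.
have up : alpha e <= indep_dom e + 1.
  apply: (@idom_ge (fun k => alpha e <= k + 1)).
  - by apply: alpha_le => S _; rewrite addn1; apply: leq_trans (max_card _) _.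
  - move=> a b ha hb' /=; case: (leqP a b) => ab.
      by [].
    by [].
  - move=> S mS; apply: alpha_le => S2 i2; exact: hb.
have lo : indep_dom e + 1 <= alpha e.
  case: lower_x => S1 [S2 [m1 i2 E]].
  apply: leq_trans (alpha_ge i2); rewrite E leq_add2r; exact: idom_le.
rewrite /almost_well_covered.
have -> : alpha e = indep_dom e + 1 by apply/eqP; rewrite eqn_leq up lo.
by rewrite addKn.
Qed.


Lemma deg2 a p q z : deg e a = 2 -> e a p -> e a q -> p != q -> e a z -> z = p \/ z = q.
Proof.
move=> d ap aq pq az.
have E : [set p; q] = [set u | e a u].
  apply/eqP; rewrite eqEcard; apply/andP; split.
    by apply/subsetP => u; rewrite !inE => /orP [] /eqP ->.
  by rewrite cards2 pq -/(deg e a) d.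
have : z \in [set p; q] by rewrite E inE.
by rewrite !inE => /orP [] /eqP; [left|right].
Qed.

Lemma CYC a b v s : deg e a = 2 -> deg e b = 2 -> e a b -> is_cycle e s -> size s = 6 ->
  a \in s -> b \in s -> v \in s -> ~~ e v a -> ~~ e v b -> v != a -> v != b ->
  forall c d, e a c -> c != b -> e b d -> d != a -> e v c \/ e v d.
Proof.
move=> da db ab /and3P [us cs _] ss aS bS vS va vb nva nvb c d ac cb bd dan.
case: (rot_to aS) => i s' E.
have cyc : cycle e (a :: s') by rewrite -E rot_cycle.
have un : uniq (a :: s') by rewrite -E rot_uniq.
have sz : size s' = 5 by have := size_rot i s; rewrite E ss /= => -[].
have mem : forall z, z \in s -> z \in a :: s' by move=> z; rewrite -E mem_rot.
move: (mem _ bS) (mem _ vS) cyc un; clear E mem.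
case: s' sz => [|s1 [|s2 [|s3 [|s4 [|s5 [|]]]]]] //= _.
rewrite !inE !negb_or => bin vin.
move=> /andP[as1 /andP[e12 /andP[e23 /andP[e34 /andP[e45 /andP[e5a _]]]]]].
move=> /andP[/and5P[na1 na2 na3 na4 na5] /andP[/and4P[n12 n13 n14 n15]
  /andP[/and3P[n23 n24 n25] /andP[/andP[n34 n35] /andP[n45 _]]]]].
have as5 : e a s5 by rewrite eC.
have Na := deg2 da as1 as5 n15.
case/Na: (ab) => Eb; subst b.
-
  have c5 : c = s5 by case: (Na _ ac) => // E; rewrite E eqxx in cb.
  have s1a : e s1 a by rewrite eC.
  have Nb := deg2 db s1a e12 na2.
  have d2 : d = s2 by case: (Nb _ bd) => // E; rewrite E eqxx in dan.
  subst c d.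
  move: vin; rewrite (negbTE nva) (negbTE nvb) /= => /or4P [] /eqP E; subst v.
  + by rewrite eC e12 in vb.
  + by right; rewrite eC.
  + by left.
  + by rewrite e5a in va.
-
  have c1 : c = s1 by case: (Na _ ac) => // E; rewrite E eqxx in cb.
  have e54 : e s5 s4 by rewrite eC.
  have n4a : s4 != a by rewrite eq_sym.
  have Nb := deg2 db e54 e5a n4a.
  have d4 : d = s4 by case: (Nb _ bd) => // E; rewrite E eqxx in dan.
  subst c d.
  move: vin; rewrite (negbTE nva) (negbTE nvb) orbF /= => /or4P [] /eqP E; subst v.
  + by rewrite eC as1 in va.
  + by left; rewrite eC.
  + by right.
  + by rewrite eC e54 in vb.
Qed.


Lemma card_le1 (A : {set T}) u v : A \subset [set u; v] -> ~~ ((u \in A) && (v \in A)) -> #|A| <= 1.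
Proof.
move=> sub nb.
case: (boolP (u \in A)) => uA.
  have : A \subset [set u].
    apply/subsetP => z zA; move/subsetP: sub => /(_ _ zA); rewrite !inE => /orP [//|/eqP E].
    by subst z; rewrite zA uA in nb.
  by move/subset_leq_card; rewrite cards1.
have : A \subset [set v].
  apply/subsetP => z zA; move/subsetP: sub => /(_ _ zA); rewrite !inE => /orP [/eqP E|//].
  by subst z; rewrite zA in uA.
by move/subset_leq_card; rewrite cards1.
Qed.

Lemma if_dir : e x y ->
   (P = set0 \/
    exists a b : T,
      [/\ a != b /\ e a b, P = [set a; b],
          [/\ ~~ e x a, ~~ e x b, ~~ e y a & ~~ e y b],
          (deg e a = 2 /\ deg e b = 2) &
          exists s : seq T,
            [/\ size s = 6, induced_cycle e s &
                [/\ a \in s, b \in s, x \in s & y \in s]]]) ->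
  almost_well_covered e.
Proof.
move=> exy H; apply: awc_of_bound => S1 S2 m1 i2.
have U := upper_gen m1 i2.
have i1 := max_ind m1.
have xy1 : #|[set x; y] :&: S1| <= 1.
  apply: (@card_le1 _ x y); first exact: subsetIl.
  rewrite !inE !eqxx /= orbT /=; apply/negP => /andP [xS yS].
  by move/indepP: i1 => /(_ _ _ xS yS); rewrite exy.
suff K : #|P :&: S2| + #|[set x; y] :&: S1| <= #|P :&: S1| + 1.
  rewrite -(leq_add2r #|P :&: S1|); apply: leq_trans U _.
  by rewrite -!addnA leq_add2l [1 + _]addnC.
case: H => [P0|[a [b [[nab ab] PE [xa xb ya yb] [da db] [s [ss [cs _] [aS bS xS yS]]]]]]].
  by rewrite P0 !set0I cards0 add0n.
have p2 : #|P :&: S2| <= 1.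
  apply: (@card_le1 _ a b).
    by apply/subsetP => z; rewrite inE => /andP [zP _]; rewrite -PE.
  rewrite !in_setI PE !inE !eqxx /= orbT /=; apply/negP => /andP [aS2 bS2].
  by move/indepP: i2 => /(_ _ _ aS2 bS2); rewrite ab.
have aP : a \in P by rewrite PE !inE eqxx.
have bP : b \in P by rewrite PE !inE eqxx orbT.
have KEY : forall v, v \in S1 -> ~~ e v a -> ~~ e v b -> v != a -> v != b -> v \in s ->
    (a \in S1) || (b \in S1).
  move=> v vS va vb nva nvb vs; case: (boolP ((a \in S1) || (b \in S1))) => // /norP [naS nbS]; exfalso.
  case: (max_dom m1 naS) => c [cS ca]; case: (max_dom m1 nbS) => d [dS d_b].
  have cb : c != b by apply: contraNneq nbS => <-.
  have dan : d != a by apply: contraNneq naS => <-.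
  rewrite eC in ca; rewrite eC in d_b.
  case: (CYC da db ab cs ss aS bS vs va vb nva nvb ca cb d_b dan) => h.
    by move/indepP: i1 => /(_ _ _ vS cS); rewrite h.
  by move/indepP: i1 => /(_ _ _ vS dS); rewrite h.
have p1 : (x \in S1) || (y \in S1) -> 1 <= #|P :&: S1|.
  move=> h; rewrite card_gt0; apply/set0Pn.
  have : (a \in S1) || (b \in S1).
    case/orP: h => h.
      by apply: (KEY x) => //; rewrite ?eC ?(eq_sym x) ?(neqPx aP) ?(neqPx bP) //.
    by apply: (KEY y) => //; rewrite ?eC ?(eq_sym y) ?(neqPy aP) ?(neqPy bP) //.
  by case/orP => h'; [exists a|exists b]; rewrite inE h' ?aP ?bP.
case: (boolP ((x \in S1) || (y \in S1))) => h.
  apply: leq_trans (leq_add p2 xy1) _; by rewrite addn1 addn1 ltnS (p1 h).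
have E0 : [set x; y] :&: S1 = set0.
  apply/setP => z; rewrite !inE; case/norP: h => /negbTE hx /negbTE hy.
  by case/boolP: (z == x) => [/eqP ->|_]; rewrite ?hx //=; case/boolP: (z == y) => [/eqP ->|_]; rewrite ?hy.
by rewrite E0 cards0 addn0; apply: leq_trans p2 _; apply: leq_addl.
Qed.


Lemma maxLs S r l : maximal_independent e S -> r \notin S -> l \in Ls r -> l \in S.
Proof.
move=> m rS; rewrite inLs => /andP [rl hl]; apply/negP => /negP lS.
case: (max_dom m lS) => u [uS ul]; rewrite eC in ul; rewrite eC in rl.
by move: rS; rewrite -(leaf_uniq hl ul rl) uS.
Qed.

Lemma Ls_sub_cnt (S : {set T}) r : Ls r \subset S -> (r \in S) + tp r <= cnt S r.
Proof.
move=> sub; rewrite /cnt leq_add2l /tp; apply: subset_leq_card.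
by apply/subsetP => l lL; rewrite inE lL andbT; move/subsetP: sub; apply.
Qed.

Lemma witness (Q Z V : {set T}) :
  (forall q, q \in Q -> ~~ lf q /\ q \notin P) ->
  independent e Q ->
  (forall z, z \in Z -> z \in P) -> independent e Z ->
  (forall z q, z \in Z -> q \in Q -> ~~ e q z) ->
  (forall v, v \in V -> v \in P) -> independent e V ->
  (forall v, v \in V -> exists2 q, q \in Q & e q v) ->
  (forall v w, v \in V -> w \in P -> e v w ->
     (exists2 q, q \in Q & e q w) \/ (exists2 z, z \in Z & e z w)) ->
  2 <= #|V| + #|Q :&: [set x; y]| ->
  ~ almost_well_covered e.
Proof.
move=> hQ iQ hZ iZ ZQ hV iV VQ VN two awc.
pose L0 := [set l | lf l & [forall q in Q, ~~ e q l]].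
have iB : independent e (Q :|: Z :|: L0).
  apply/indepP => u w; rewrite !inE.
  move=> /orP [/orP [uQ|uZ]|/andP [hu /forall_inP fu]] /orP [/orP [wQ|wZ]|/andP [hw /forall_inP fw]].
  - by move/indepP: iQ; apply.
  - by apply: ZQ.
  - by apply: fw.
  - by rewrite eC; apply: ZQ.
  - by move/indepP: iZ; apply.
  - by apply/negP => h; have := P_nbr (hZ _ uZ) h; rewrite hw.
  - by rewrite eC; apply: fu.
  - by apply/negP => h; rewrite eC in h; have := P_nbr (hZ _ wZ) h; rewrite hu.
  - by apply/negP => h; have := leaf_int hu h; rewrite hw.
case: (exists_max iB) => S1 [m1 sub1].
have i1 := max_ind m1.
have QS1 : forall q, q \in Q -> q \in S1.
  by move=> q qQ; move/subsetP: sub1; apply; rewrite !inE qQ.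
have ZS1 : forall z, z \in Z -> z \in S1.
  by move=> z zZ; move/subsetP: sub1; apply; rewrite !inE zZ orbT.
have m2 : forall r, ~~ lf r -> r \notin P -> r \notin Q -> r \notin S1.
  move=> r hr rP rQ; case: (nonP_leaf hr rP) => l [rl hl].
  have lS : l \in S1.
    move/subsetP: sub1; apply; rewrite !inE hl /=; apply/orP; right; apply/forall_inP => q qQ.
    apply/negP => ql; rewrite eC in ql; rewrite eC in rl.
    by move: rQ; rewrite -(leaf_uniq hl ql rl) qQ.
  by apply/negP => rS; move/indepP: i1 => /(_ _ _ rS lS); rewrite rl.
pose LQ := [set l | lf l & [exists q in Q, e q l]].
pose S2 := (S1 :\: Q) :|: LQ :|: V.
have iS2 : independent e S2.
  apply/indepP => u w; rewrite !inE.
  have key : forall u w, u \in S1 -> u \notin Q -> w \in V -> ~~ e u w.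
    move=> a v aS aQ vV; apply/negP => av.
    case: (classify a) => [ha|[aP|[aG|[ax|ay]]]].
    - by have := P_nbr (hV _ vV) (etrans (eC v a) av); rewrite ha.
    - rewrite eC in av; case: (VN _ _ vV aP av) => [[q qQ qa]|[z zZ za]].
        by move/indepP: i1 => /(_ _ _ (QS1 _ qQ) aS); rewrite qa.
      by move/indepP: i1 => /(_ _ _ (ZS1 _ zZ) aS); rewrite za.
    - by move: aS; rewrite (negbTE (m2 _ (G1_int aG) (G1nP aG) aQ)).
    - subst a; by move: aS; rewrite (negbTE (m2 _ (proj1 tpx) xnP aQ)).
    - subst a; by move: aS; rewrite (negbTE (m2 _ (proj1 tpy) ynP aQ)).
  have key2 : forall u w, u \in S1 -> u \notin Q -> lf w -> (exists2 q, q \in Q & e q w) -> ~~ e u w.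
    move=> a l aS aQ hl [q qQ ql]; apply/negP => al.
    rewrite eC in al; rewrite eC in ql.
    by move: aQ; rewrite (leaf_uniq hl al ql) qQ.
  have key3 : forall l v, lf l -> v \in V -> ~~ e l v.
    by move=> l v hl vV; apply/negP => lv; have := P_nbr (hV _ vV) (etrans (eC v l) lv); rewrite hl.
  move=> /orP [/orP [/andP [uQ uS]|/andP [hu /exists_inP eu]]|uV]
         /orP [/orP [/andP [wQ wS]|/andP [hw /exists_inP ew]]|wV].
  - by move/indepP: i1; apply.
  - by apply: key2.
  - by apply: key.
  - by rewrite eC; apply: key2.
  - by apply/negP => h; have := leaf_int hu h; rewrite hw.
  - by apply: key3.
  - by rewrite eC; apply: key.
  - by rewrite eC; apply: key3.
  - by move/indepP: iV; apply.
have intQ : forall r, r \in Q :&: [set x; y] -> ~~ lf r.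
  by move=> r; rewrite inE => /andP [/hQ []].
have intV : forall r, r \in V -> ~~ lf r by move=> r /hV /P_int.
have big : #|S1| + #|Q :&: [set x; y]| + #|V| <= #|S2|.
  rewrite (count_split S1) (count_split S2) -(sum_ind intQ) -(sum_ind intV) -!big_split /=.
  apply: leq_sum => r hr; rewrite (cnt_max m1 hr).
  case: (boolP (r \in Q)) => rQ.
  - have [_ rP] := hQ _ rQ.
    have rV : r \in V = false by apply/negbTE; apply: contra rP; apply: hV.
    rewrite QS1 // rV addn0 in_setI rQ /=.
    have sub : Ls r \subset S2.
      apply/subsetP => l; rewrite inLs => /andP [rl hl]; rewrite !inE hl /=.
      by apply/orP; left; apply/orP; right; apply/exists_inP; exists r.
    apply: leq_trans (Ls_sub_cnt sub); apply: leq_trans (leq_addl _ _).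
    case: (classify r) => [|[|[rG|[->|->]]]].
    + by rewrite (negbTE hr).
    + by rewrite (negbTE rP).
    + by move: (rG); rewrite /G1 => /andP [_ /eqP ->]; rewrite !inE (negbTE (neqG1x rG)) (negbTE (neqG1y rG)).
    + by rewrite (proj2 tpx) !inE eqxx.
    + by rewrite (proj2 tpy) !inE eqxx orbT.
  - rewrite in_setI (negbTE rQ) /= addn0.
    case: (boolP (r \in P)) => rP.
    + have t0 : tp r = 0 by move: rP; rewrite inP => /andP [_ /eqP].
      have sub : Ls r \subset S2.
        by move/eqP: (t0); rewrite /tp cards_eq0 => /eqP ->; apply: sub0set.
      apply: leq_trans (Ls_sub_cnt sub); rewrite t0 addn0.
      case: (boolP (r \in V)) => rV.
        case: (VQ _ rV) => q qQ qr.
        have rS : r \in S1 = false.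
          by apply/negbTE/negP => rS; move/indepP: i1 => /(_ _ _ (QS1 _ qQ) rS); rewrite qr.
        by rewrite rS !inE rV orbT.
      by rewrite addn0; case: ifP => // rS; rewrite !inE rS rQ.
    + have rS := m2 _ hr rP rQ.
      have rV : r \in V = false by apply/negbTE; apply: contra rP; apply: hV.
      rewrite (negbTE rS) rV addn0.
      have sub : Ls r \subset S2.
        apply/subsetP => l lL; have lS := maxLs m1 rS lL.
        move: lL; rewrite inLs => /andP [_ hl].
        rewrite !inE lS andbT; apply/orP; left; apply/orP; left.
        by apply/negP => lQ; have [] := hQ _ lQ; rewrite hl.
      by apply: leq_trans (Ls_sub_cnt sub); apply: leq_addl.
move: awc; rewrite /almost_well_covered => E.
have h1 := idom_le m1; have h2 := alpha_ge iS2.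
have : indep_dom e + 2 <= alpha e.
  apply: leq_trans h2; apply: leq_trans big; rewrite -addnA; apply: leq_add => //.
  by rewrite addnC.
move=> H; have := leq_sub2r (indep_dom e) H; by rewrite addKn E.
Qed.


Lemma induced6 v0 v1 v2 v3 v4 v5 :
  uniq [:: v0; v1; v2; v3; v4; v5] ->
  e v0 v1 -> e v1 v2 -> e v2 v3 -> e v3 v4 -> e v4 v5 -> e v5 v0 ->
  ~~ e v0 v2 -> ~~ e v0 v3 -> ~~ e v0 v4 -> ~~ e v1 v3 -> ~~ e v1 v4 ->
  ~~ e v1 v5 -> ~~ e v2 v4 -> ~~ e v2 v5 -> ~~ e v3 v5 ->
  induced_cycle e [:: v0; v1; v2; v3; v4; v5].
Proof.
move=> un e01 e12 e23 e34 e45 e50 n02 n03 n04 n13 n14 n15 n24 n25 n35.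
split; first by rewrite /is_cycle un /= e01 e12 e23 e34 e45 e50.
move: (un); rewrite /= !inE !negb_or.
move=> /andP[/and5P[a1 a2 a3 a4 a5] /andP[/and4P[b2 b3 b4 b5]
  /andP[/and3P[c3 c4 c5] /andP[/andP[d4 d5] /andP[f5 _]]]]].
have F : forall a b : T, a != b -> (b == a) = false by move=> a b h; rewrite eq_sym; apply: negbTE.
have G : forall a b : T, a != b -> (a == b) = false by move=> a b h; apply: negbTE.
move=> u w; rewrite !inE => hu hw.
case/or4P: hu => [/eqP ->|/eqP ->|/eqP ->|/orP [/eqP ->|/orP [/eqP ->|/eqP ->]]];
case/or4P: hw => [/eqP ->|/eqP ->|/eqP ->|/orP [/eqP ->|/orP [/eqP ->|/eqP ->]]] uw;
  rewrite /= ?eqxx ?(F _ _ a1) ?(F _ _ a2) ?(F _ _ a3) ?(F _ _ a4) ?(F _ _ a5)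
    ?(F _ _ b2) ?(F _ _ b3) ?(F _ _ b4) ?(F _ _ b5) ?(F _ _ c3) ?(F _ _ c4) ?(F _ _ c5)
    ?(F _ _ d4) ?(F _ _ d5) ?(F _ _ f5)
    ?(G _ _ a1) ?(G _ _ a2) ?(G _ _ a3) ?(G _ _ a4) ?(G _ _ a5)
    ?(G _ _ b2) ?(G _ _ b3) ?(G _ _ b4) ?(G _ _ b5) ?(G _ _ c3) ?(G _ _ c4) ?(G _ _ c5)
    ?(G _ _ d4) ?(G _ _ d5) ?(G _ _ f5) //=;
  idtac.
all: exfalso; move: uw; apply/negP; first [ assumption | rewrite eC; assumption | rewrite eirr // ].
Qed.


Definition near v a := (e a v /\ a \notin P) \/ (exists w, [/\ w \in P, e v w, e a w & a != v]).

Lemma near_noedge v a b : near v a -> near v b -> e a b -> False.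
Proof.
have ne : forall a w, a \notin P -> w \in P -> a != w.
  by move=> a' w aP wP; apply: contraNneq aP => ->.
move=> [[av aP]|[w [wP vw aw anv]]] [[bv bP]|[w' [wP' vw' bw' bnv]]] ab.
- exact: C3 ab bv (etrans (eC v a) av).
- by apply: (C4 ab bw' (etrans (eC w' v) vw') (etrans (eC v a) av)); [apply: ne|].
- by apply: (C4 (etrans (eC b a) ab) aw (etrans (eC w v) vw) (etrans (eC v b) bv)); [apply: ne|].
- case: (eqVneq w w') => [E|nww].
    by subst w'; apply: (C3 ab bw' (etrans (eC w a) aw)).
  have naw' : a != w'.
    by apply/negP => /eqP E; subst a; apply: (C3 aw (etrans (eC w v) vw) vw').
  have nbw : w != b.
    by apply/negP => /eqP E; subst b; apply: (C3 bw' (etrans (eC w' v) vw') vw).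
  apply: (C5 ab bw' (etrans (eC w' v) vw') vw (etrans (eC w a) aw)) => //.
  all: by rewrite eq_sym.
Qed.

Lemma other_nbr w v : ~~ lf w -> e w v -> exists p, e w p /\ p != v.
Proof.
move=> hw wv; case: (classic (exists p, e w p /\ p != v)) => // H; exfalso.
have E : [set u | e w u] = [set v].
  apply/setP => u; rewrite !inE; apply/idP/idP => [wu|/eqP -> //].
  by apply/negPn/negP => nuv; apply: H; exists u.
by move: hw; rewrite /lf /deg E cards1.
Qed.

Lemma W0 : almost_well_covered e -> e x y.
Proof.
move=> awc; case: (boolP (e x y)) => // nxy; exfalso.
apply: (@witness [set x; y] set0 set0) => //.
- move=> q; rewrite in_set2 => /orP [] /eqP ->.
    by split; [apply: (proj1 tpx)|apply: xnP].
  by split; [apply: (proj1 tpy)|apply: ynP].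
- apply/indepP => u w; rewrite !inE => /orP [] /eqP -> /orP [] /eqP ->;
    rewrite ?eirr //; by rewrite eC.
- by move=> z; rewrite inE.
- by apply/indepP => u w; rewrite inE.
- by move=> z q; rewrite inE.
- by move=> v; rewrite inE.
- by apply/indepP => u w; rewrite inE.
- by move=> v; rewrite inE.
- by move=> v w; rewrite inE.
- by rewrite cards0 setIid cards2 Hxy.
Qed.


Lemma st_facts s t : e x y -> ((s = x /\ t = y) \/ (s = y /\ t = x)) ->
  [/\ e t s, ~~ lf s, s \notin P, ~~ lf t & t \notin P] /\ (s \in [set x; y]).
Proof.
move=> exy [[-> ->]|[-> ->]]; rewrite in_set2 eqxx ?orbT; split => //;
  split; rewrite ?(proj1 tpx) ?(proj1 tpy) ?xnP ?ynP //; by rewrite eC.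
Qed.

Lemma W1 s t v : almost_well_covered e -> e x y -> ((s = x /\ t = y) \/ (s = y /\ t = x)) ->
  v \in P -> (e v s \/ exists u, [/\ G1 u, e v u & ~~ e u s]) ->
  exists w, [/\ w \in P, e v w, ~~ e w s & forall z, e w z -> z != v -> e z s].
Proof.
move=> awc exy st vP hyp.
have [[ts hs sP ht tP] sxy] := st_facts exy st.
have tneq : t != s by apply: eneq.
case: (classic (exists w, [/\ w \in P, e v w, ~~ e w s & forall z, e w z -> z != v -> e z s])) => // NEG.
exfalso.
pose Q := s |: [set u | G1 u && ~~ e u s && (e u v || [exists w, (w \in P) && e v w && e u w])].
pose Z := [set z | (z \in P) && (z != v) && ~~ e z s && [exists w, (w \in P) && e v w && e z w]].
have nearQ : forall u, u \in Q -> u != s -> near v u.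
  move=> u; rewrite in_setU1 inE.
  move=> /orP [/eqP -> |/andP [/andP [uG _] /orP [uv|/existsP [w /andP [/andP [wP vw] uw]]]]];
    first by rewrite eqxx.
    by left; split => //; apply: G1nP.
  right; exists w; split => //; rewrite eq_sym; apply: neqPG1 => //.
have nearZ : forall z, z \in Z -> near v z.
  move=> z; rewrite inE => /andP [/andP [/andP [_ zv] _] /existsP [w /andP [/andP [wP vw] zw]]].
  by right; exists w.
apply: (@witness Q Z [set v]) => //.
- move=> q; rewrite in_setU1 => /orP [/eqP ->|]; first by split.
  by rewrite inE => /andP [/andP [qG _] _]; split; [apply: G1_int|apply: G1nP].
- apply/indepP => u w uQ wQ.
  case: (eqVneq u s) => [->|us].
    case: (eqVneq w s) => [->|ws]; first by rewrite eirr.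
    by move: wQ; rewrite in_setU1 (negbTE ws) inE eC => /andP [/andP [_ ->]].
  case: (eqVneq w s) => [->|ws].
    by move: uQ; rewrite in_setU1 (negbTE us) inE => /andP [/andP [_ ->]].
  by apply/negP => uw; apply: (near_noedge (nearQ _ uQ us) (nearQ _ wQ ws) uw).
- by move=> z; rewrite inE => /andP [/andP [/andP []]].
- by apply/indepP => u w uZ wZ; apply/negP => uw; apply: (near_noedge (nearZ _ uZ) (nearZ _ wZ) uw).
- move=> z q zZ qQ.
  case: (eqVneq q s) => [->|qs].
    by move: zZ; rewrite inE eC => /andP [/andP [/andP [_ _] ]].
  by apply/negP => qz; apply: (near_noedge (nearQ _ qQ qs) (nearZ _ zZ) qz).
- by move=> w; rewrite inE => /eqP ->.
- by apply/indepP => u w; rewrite !inE => /eqP -> /eqP ->; rewrite eirr.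
- move=> w; rewrite inE => /eqP ->.
  case: hyp => [vs|[u [uG vu us]]].
    by exists s; rewrite ?setU11 // eC.
  exists u; last by rewrite eC.
  by rewrite in_setU1 inE uG us /= eC vu orbT.
- move=> v' w; rewrite inE => /eqP -> wP vw.
  case: (boolP (e w s)) => ws.
    by left; exists s; rewrite ?setU11 // eC.
  have : ~ (forall z, e w z -> z != v -> e z s) by move=> H; apply: NEG; exists w.
  move=> H; case: (classic (exists z, [/\ e w z, z != v & ~~ e z s])) => [[z [wz zv zs]]|H2]; last first.
    exfalso; apply: H => z wz zv; case: (boolP (e z s)) => // zs; exfalso; apply: H2; exists z.
    by split.
  case: (classify z) => [hz|[zP|[zG|[zx|zy]]]].
  + by have := P_nbr wP wz; rewrite hz.
  + right; exists z; last by rewrite eC.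
    rewrite inE zP zv zs /=; apply/existsP; exists w; by rewrite wP vw eC wz.
  + left; exists z; last by rewrite eC.
    rewrite in_setU1 inE zG zs /=; apply/orP; right; apply/orP; right.
    by apply/existsP; exists w; rewrite wP vw eC wz.
  + exfalso; case: st => [[E1 E2]|[E1 E2]]; subst.
    * by rewrite wz in ws.
    * by rewrite ts in zs.
  + exfalso; case: st => [[E1 E2]|[E1 E2]]; subst.
    * by rewrite ts in zs.
    * by rewrite wz in ws.
- rewrite cards1 (_ : 2 = 1 + 1) // leq_add2l card_gt0; apply/set0Pn; exists s.
  by rewrite in_setI setU11 sxy.
Qed.


Lemma st_of s : s = x \/ s = y -> exists t, (s = x /\ t = y) \/ (s = y /\ t = x).
Proof. by case=> ->; [exists y; left|exists x; right]. Qed.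

Lemma step1 s v : almost_well_covered e -> e x y -> s = x \/ s = y -> v \in P -> ~~ e v s.
Proof.
move=> awc exy hs vP; case: (st_of hs) => t st.
have [[ts hsi sP hti tP] sxy] := st_facts exy st.
apply/negP => vs.
case: (W1 awc exy st vP (or_introl vs)) => w [wP vw ws Hw].
case: (other_nbr (P_int wP) (etrans (eC w v) vw)) => p [wp pv].
have ps := Hw _ wp pv.
apply: (C4 (etrans (eC s v) vs) vw wp ps).
  by apply: contraNneq sP => ->.
by rewrite eq_sym.
Qed.

Lemma step1' s v : almost_well_covered e -> e x y -> s = x \/ s = y -> v \in P -> ~~ e s v.
Proof. by move=> *; rewrite eC; apply: step1. Qed.

Lemma struct_st s t v u : almost_well_covered e -> e x y -> ((s = x /\ t = y) \/ (s = y /\ t = x)) ->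
  v \in P -> G1 u -> e v u -> ~~ e u s ->
  exists w p, [/\ [/\ w \in P, e v w, G1 p, e w p & e p s], e u t,
     (forall z, e w z -> z = v \/ z = p) & (forall z, e v z -> z = w \/ z = u)].
Proof.
move=> awc exy st vP uG vu us.
have [[ts hsi sP hti tP] sxy] := st_facts exy st.
have hs : s = x \/ s = y by case: st => [[-> _]|[-> _]]; [left|right].
have ht : t = x \/ t = y by case: st => [[_ ->]|[_ ->]]; [right|left].
case: (W1 awc exy st vP (or_intror (ex_intro _ u (And3 uG vu us)))) => w [wP vw ws Hw].
case: (other_nbr (P_int wP) (etrans (eC w v) vw)) => p [wp pv].
have ps := Hw _ wp pv.
have pG : G1 p.
  case: (classify p) => [hp|[pP|[//|[px|py]]]].
  - by have := P_nbr wP wp; rewrite hp.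
  - by have := step1 awc exy hs pP; rewrite ps.
  - have : p = s \/ p = t by case: st => [[E1 E2]|[E1 E2]]; rewrite px E1 E2; auto.
    case=> E; first by rewrite E eirr in ps.
    by have := step1 awc exy ht wP; rewrite -E wp.
  - have : p = s \/ p = t by case: st => [[E1 E2]|[E1 E2]]; rewrite py E1 E2; auto.
    case=> E; first by rewrite E eirr in ps.
    by have := step1 awc exy ht wP; rewrite -E wp.
have ws' : w != s by apply: contraNneq sP => <-.
have Nw : forall z, e w z -> z = v \/ z = p.
  move=> z wz; case: (eqVneq z v) => [->|zv]; first by left.
  right; apply/eqP; apply/negP => /negP zp.
  exact: (C4 wz (Hw _ wz zv) (etrans (eC s p) ps) (etrans (eC p w) wp) ws' zp).
have pt : ~~ e p t by apply/negP => pt; apply: (C3 pt ts (etrans (eC s p) ps)).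
have st' : (t = x /\ s = y) \/ (t = y /\ s = x) by case: st => [[-> ->]|[-> ->]]; [right|left].
case: (W1 awc exy st' wP (or_intror (ex_intro _ p (And3 pG wp pt)))) => w' [w'P ww' w't Hw'].
have w'v : w' = v.
  case: (Nw _ ww') => // E; subst w'; by have := G1nP pG; rewrite w'P.
subst w'.
have uw : u != w by rewrite eq_sym; apply: neqPG1.
have ut := Hw' _ vu uw.
exists w, p; split => //.
move=> z vz; case: (eqVneq z w) => [->|zw]; first by left.
right; apply/eqP; apply/negP => /negP zu.
have vt : v != t by apply: contraNneq tP => <-.
exact: (C4 vz (Hw' _ vz zw) (etrans (eC t u) ut) (etrans (eC u v) vu) vt zu).
Qed.


Lemma structure v u : almost_well_covered e -> e x y -> v \in P -> G1 u -> e v u ->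
  exists s t w p, [/\ (s = x /\ t = y) \/ (s = y /\ t = x),
     [/\ w \in P, e v w, G1 p, e w p & e p s], e u t,
     (forall z, e w z -> z = v \/ z = p) & (forall z, e v z -> z = w \/ z = u)].
Proof.
move=> awc exy vP uG vu.
case: (boolP (e u x)) => ux.
  have uy : ~~ e u y by apply/negP => uy; apply: (C3 ux exy (etrans (eC y u) uy)).
  have st : (y = y /\ x = x) \/ (y = x /\ x = y) by left.
  have st' : (y = x /\ x = y) \/ (y = y /\ x = x) by right.
  case: (struct_st awc exy st' vP uG vu uy) => w [p [A B C D]].
  by exists y, x, w, p; split.
have st : (x = x /\ y = y) \/ (x = y /\ y = x) by left.
case: (struct_st awc exy st vP uG vu ux) => w [p [A B C D]].
by exists x, y, w, p; split.
Qed.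

Lemma G1_adj q v : almost_well_covered e -> e x y -> G1 q -> v \in P -> e q v -> e q x \/ e q y.
Proof.
move=> awc exy qG vP qv.
case: (structure awc exy vP qG (etrans (eC v q) qv)) => s [t [w [p [st _ qt _ _]]]].
by case: st => [[_ E]|[_ E]]; subst t; auto.
Qed.

Lemma allG1 v : almost_well_covered e -> e x y -> v \in P -> exists u, G1 u /\ e v u.
Proof.
move=> awc exy vP.
case: (classic (exists u, G1 u /\ e v u)) => // H; exfalso.
pose A := [set z | (z \in P) && [forall u, G1 u ==> ~~ e z u]].
have fwd : forall a b, a \in A -> e a b -> b \in A.
  move=> a b; rewrite inE => /andP [aP /forallP aN] ab.
  have bP : b \in P.
    case: (classify b) => [hb|[//|[bG|[bx|by']]]].
    - by have := P_nbr aP ab; rewrite hb.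
    - by have := aN b; rewrite bG ab.
    - by have := step1 awc exy (or_introl bx) aP; rewrite ab.
    - by have := step1 awc exy (or_intror by') aP; rewrite ab.
  rewrite inE bP /=; apply/forallP => u; apply/implyP => uG; apply/negP => bu.
  case: (structure awc exy bP uG bu) => s [t [w [p [_ [wP bw pG wp _] _ _ Nb]]]].
  case: (Nb a (etrans (eC b a) ab)) => E.
    by subst w; have := aN p; rewrite pG wp.
  by subst a; have := G1nP uG; rewrite aP.
have cl : closed e (mem A).
  move=> a b ab; apply/idP/idP => h; first exact: fwd h ab.
  by apply: fwd h _; rewrite eC.
have vA : v \in A.
  rewrite inE vP /=; apply/forallP => u; apply/implyP => uG; apply/negP => vu.
  by apply: H; exists u.
have := closed_connect cl (Hconn v x); rewrite vA => /esym.
by rewrite inE (negbTE xnP).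
Qed.


Lemma deg_two v p q : p != q -> (forall z, e v z -> z = p \/ z = q) -> e v p -> e v q -> deg e v = 2.
Proof.
move=> pq N vp vq; rewrite /deg.
have -> : [set z | e v z] = [set p; q].
  apply/setP => z; rewrite !inE; apply/idP/idP => [/N [] ->|/orP [] /eqP ->] //;
  by rewrite eqxx ?orbT.
by rewrite cards2 pq.
Qed.

Lemma only_if : almost_well_covered e ->
  e x y /\
   (P = set0 \/
    exists a b : T,
      [/\ a != b /\ e a b, P = [set a; b],
          [/\ ~~ e x a, ~~ e x b, ~~ e y a & ~~ e y b],
          (deg e a = 2 /\ deg e b = 2) &
          exists s : seq T,
            [/\ size s = 6, induced_cycle e s &
                [/\ a \in s, b \in s, x \in s & y \in s]]]).
Proof.
move=> awc; have exy := W0 awc; split => //.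
case: (set_0Vmem P) => [P0|[a aP]]; first by left.
right.
case: (allG1 awc exy aP) => u [uG au].
case: (structure awc exy aP uG au) => s [t [b [p [st [bP ab pG bp ps] ut Nb Na]]]].
have [[ts hsi sP hti tP] sxy] := st_facts exy st.
have hs : s = x \/ s = y by case: st => [[-> _]|[-> _]]; [left|right].
have ht : t = x \/ t = y by case: st => [[_ ->]|[_ ->]]; [right|left].
have G1s : forall q, G1 q -> q != s by move=> q qG; case: hs => ->; [apply: neqG1x|apply: neqG1y].
have G1t : forall q, G1 q -> q != t by move=> q qG; case: ht => ->; [apply: neqG1x|apply: neqG1y].
have Ps : forall q, q \in P -> q != s by move=> q qP; case: hs => ->; [apply: neqPx|apply: neqPy].
have Pt : forall q, q \in P -> q != t by move=> q qP; case: ht => ->; [apply: neqPx|apply: neqPy].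
have up : u != p.
  by apply/negP => /eqP E; subst p; apply: (C3 ps (etrans (eC s t) ts) (etrans (eC t u) ut)).
have PE : P = [set a; b].
  apply/setP => z; rewrite in_set2; apply/idP/idP; last by case/orP => /eqP ->.
  move=> zP; case: (boolP ((z == a) || (z == b))) => // /norP [za zb]; exfalso.
  pose Q := [set q | G1 q && [exists v, (v \in P) && e q v]].
  apply: (@witness Q set0 [set a; z]) => //.
  - by move=> q; rewrite inE => /andP [qG _]; split; [apply: G1_int|apply: G1nP].
  - apply/indepP => q q'; rewrite !inE => /andP [qG /existsP [v /andP [vP qv]]]
      /andP [q'G /existsP [v' /andP [v'P q'v']]]; apply/negP => qq'.
    have nqx := neqG1x qG; have nqy := neqG1y qG.
    have nq'x := neqG1x q'G; have nq'y := neqG1y q'G.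
    case: (G1_adj awc exy qG vP qv) => h; case: (G1_adj awc exy q'G v'P q'v') => h'.
    + exact: (C3 qq' h' (etrans (eC x q) h)).
    + exact: (C4 qq' h' (etrans (eC y x) exy) (etrans (eC x q) h) nqy nq'x).
    + exact: (C4 qq' h' exy (etrans (eC y q) h) nqx nq'y).
    + exact: (C3 qq' h' (etrans (eC y q) h)).
  - by move=> w; rewrite inE.
  - by apply/indepP => ? ?; rewrite inE.
  - by move=> w; rewrite inE.
  - by move=> v; rewrite in_set2 => /orP [] /eqP ->.
  - apply/indepP => v w; rewrite !in_set2.
    have az : ~~ e a z.
      by apply/negP => az; case: (Na _ az) => E; [move: zb|have := G1nP uG]; rewrite -E ?eqxx ?zP.
    by move=> /orP [] /eqP -> /orP [] /eqP ->; rewrite ?eirr // eC.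
  - move=> v vV; have vP : v \in P by move: vV; rewrite in_set2 => /orP [] /eqP ->.
    case: (allG1 awc exy vP) => q [qG vq]; exists q; last by rewrite eC.
    by rewrite inE qG /=; apply/existsP; exists v; rewrite vP eC vq.
  - move=> v w _ wP _; left.
    case: (allG1 awc exy wP) => q [qG wq]; exists q; last by rewrite eC.
    by rewrite inE qG /=; apply/existsP; exists w; rewrite wP eC wq.
  - by rewrite cards2 eq_sym za.
have nab := eneq ab.
have Na' : forall z, e a z -> z = b \/ z = u by [].
exists a, b; split.
- by split.
- exact: PE.
- by split; apply: (step1' awc exy); auto.
- split.
    exact: (deg_two (neqPG1 bP uG) Na ab au).
  exact: (deg_two (neqPG1 aP pG) Nb (etrans (eC b a) ab) bp).
exists [:: u; a; b; p; s; t]; split => //.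
  apply: induced6.
  - rewrite /= !inE !negb_or.
    rewrite (eq_sym u a) (neqPG1 aP uG) (eq_sym u b) (neqPG1 bP uG) up G1s // G1t //.
    rewrite nab (neqPG1 aP pG) Ps // Pt // (neqPG1 bP pG) Ps // Pt // G1s // G1t //.
    by rewrite eq_sym eneq.
  - by rewrite eC.
  - exact: ab.
  - exact: bp.
  - exact: ps.
  - by rewrite eC.
  - by rewrite eC.
  - apply/negP => ub; case: (Nb _ (etrans (eC b u) ub)) => E.
      by move: (neqPG1 aP uG); rewrite E eqxx.
    by move: up; rewrite E eqxx.
  - apply/negP => upe; apply: (C4 upe ps (etrans (eC s t) ts) (etrans (eC t u) ut)); [exact: G1s|exact: G1t].
  - by apply/negP => us; apply: (C3 us (etrans (eC s t) ts) (etrans (eC t u) ut)).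
  - apply/negP => ap; case: (Na _ ap) => E.
      by move: (neqPG1 bP pG); rewrite E eqxx.
    by move: up; rewrite E eqxx.
  - exact: step1.
  - exact: step1.
  - exact: step1.
  - exact: step1.
  - by apply/negP => pt; apply: (C3 pt ts (etrans (eC s p) ps)).
by case: st => [[-> ->]|[-> ->]]; split; rewrite !inE !eqxx !orbT.
Qed.

End Main.

Theorem theorem14 (T : finType) (e : rel T) (x y : T) :
  simple_graph e -> connected_graph e -> girth_at_least e 6 ->
  x != y -> has_type e x 2 -> has_type e y 2 ->
  (forall v : T, has_type e v 2 -> v = x \/ v = y) ->
  (forall (v : T) (k : nat), 3 <= k -> ~~ has_type e v k) ->
  (almost_well_covered e <->
   e x y /\
   (G_ e 0 = set0 \/
    exists a b : T,
      [/\ a != b /\ e a b, G_ e 0 = [set a; b],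
          [/\ ~~ e x a, ~~ e x b, ~~ e y a & ~~ e y b],
          (deg e a = 2 /\ deg e b = 2) &
          exists s : seq T,
            [/\ size s = 6, induced_cycle e s &
                [/\ a \in s, b \in s, x \in s & y \in s]]])).
Proof.
move=> H1 H2 H3 H4 H5 H6 H7 H8; split.
  by move=> awc; apply: only_if.
move=> [exy H]; exact: (if_dir H1 H2 H5 H6 H7 H8 exy H).
Qed.
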